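(* Assume $N\ge K_R$. With the definitions in the context, the value of the optimization problem (P3), i.e. $$\min_{\text{caching realizations}}\ \frac{1}{\pi(N,K_R)}\sum_{\mathbf{d}\in\mathcal{P}_{N,K_R}}H^*\!\left(\{\mathcal{P}_i\}_{i=1}^{K_T},\{\mathcal{Q}_j\}_{j=1}^{K_R},\mathbf{d}\right),$$ the minimum being over caching realizations satisfying the constraints below, is bounded from below by $$\frac{K_R\,N\,F\left(1-\frac{M_R}{N}\right)^2}{K_TM_T+K_RM_R}.$$
   Context: Setting: $K_T$ transmitters, $K_R$ receivers, a library of $N$ files $W_1,\dots,W_N$, each consisting of $F$ packets. A caching realization consists of sets $\mathcal{P}_i$ ($i\in[K_T]$) of packets cached at transmitter $\text{Tx}_i$ and $\mathcal{Q}_j$ ($j\in[K_R]$) of packets cached at receiver $\text{Rx}_j$. For a nonempty $\mathcal{T}\subseteq[K_T]$ and $\mathcal{R}\subseteq[K_R]$, let $a_{n,\mathcal{T},\mathcal{R}}$ be the number of packets of $W_n$ cached exactly at the transmitters in $\mathcal{T}$ and the receivers in $\mathcal{R}$. The constraints on the caching realization are: $\sum_{\emptyset\ne\mathcal{T}\subseteq[K_T]}\sum_{\mathcal{R}\subseteq[K_R]}a_{n,\mathcal{T},\mathcal{R}}=F$ for all $n$ (every packet is cached by at least one transmitter); $\sum_{n}\sum_{\mathcal{R}}\sum_{\mathcal{T}\ni i}a_{n,\mathcal{T},\mathcal{R}}\le M_TF$ for all $i\in[K_T]$; $\sum_n\sum_{\emptyset\ne\mathcal{T}}\sum_{\mathcal{R}\ni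 j}a_{n,\mathcal{T},\mathcal{R}}\le M_RF$ for all $j\in[K_R]$; $a_{n,\mathcal{T},\mathcal{R}}\ge0$. Feasibility: a set $\mathcal{D}$ of $L$ requested packets, to be sent in one block to $L$ distinct receivers, is feasible if $L\le\min_{l}(|\mathcal{T}_l|+|\mathcal{R}_l|)$, where $\mathcal{T}_l,\mathcal{R}_l$ are the sets of transmitters and receivers caching the $l$-th packet. (P1): for a caching realization and a demand vector $\mathbf{d}=(d_1,\dots,d_{K_R})$ (receiver $\text{Rx}_j$ requests $W_{d_j}$), $H^*(\{\mathcal{P}_i\},\{\mathcal{Q}_j\},\mathbf{d})$ is the minimum $H$ such that there exist feasible sets $\mathcal{D}_1,\dots,\mathcal{D}_H$ with $\bigcup_{m=1}^H\mathcal{D}_m=\bigcup_{j=1}^{K_R}(W_{d_j}\setminus\mathcal{Q}_j)$. $\mathcal{P}_{N,K_R}$ is the set of demand vectors with pairwise distinct entries, of cardinality $\pi(N,K_R)=\frac{N!}{(N-K_R)!}$. *)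

(* Defs.v *)
From HB Require Import structures.
From mathcomp Require Import all_boot all_order all_algebra.
From Stdlib Require Import ClassicalEpsilon.
Set Implicit Arguments. Unset Strict Implicit. Unset Printing Implicit Defensive.
Import Order.TTheory GRing.Theory Num.Theory.

Section Model.
Variables (KT KR N F : nat).

(* a packet of the library: (file index n, packet index within the file) *)
Definition packet := ('I_N * 'I_F)%type.
(* a request: a packet together with the receiver it is to be delivered to *)
Definition request := (packet * 'I_KR)%type.

(* a caching realization: P i = packets cached at Tx_i, Q j = packets cached at Rx_j;
   a demand vector d : receiver Rx_j requests file W_(d j) *)
Variables (P : 'I_KT -> {set packet}) (Q : 'I_KR -> {set packet}).

Definition Tx_of (p : packet) : {set 'I_KT} := [set i | p \in P i].
Definition Rx_of (p : packet) : {set 'I_KR} := [set j | p \in Q j].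

(* all (packet, receiver) pairs still to be delivered:
   \bigcup_j (W_(d_j) \ Q_j), each packet tagged with its requesting receiver *)
Definition requests (d : {ffun 'I_KR -> 'I_N}) : {set request} :=
  [set x : request | (x.1.1 == d x.2) && (x.1 \notin Q x.2)].

Definition feasible (D : {set request}) : bool :=
  [forall x in D, forall y in D, (x.2 == y.2) ==> (x == y)] &&
  [forall x in D, #|D| <= #|Tx_of x.1| + #|Rx_of x.1|].

Definition coverable (d : {ffun 'I_KR -> 'I_N}) (H : nat) : bool :=
  [exists Ds : {ffun 'I_H -> {set request}},
     [forall m, feasible (Ds m)] && (\bigcup_(m < H) Ds m == requests d)].

(* H^*(P, Q, d): the minimum such H (0 by convention if no H exists, which
   cannot happen for a valid caching realization) *)
Definition Hstar (d : {ffun 'I_KR -> 'I_N}) : nat :=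
  match excluded_middle_informative (exists H, coverable d H) with
  | left e => ex_minn e
  | right _ => 0%N
  end.

Definition valid_caching (R : numDomainType) (MT MR : R) : Prop :=
  (forall p : packet, exists i, p \in P i) /\
  (forall i, (#|P i|%:R <= MT * F%:R)%R) /\
  (forall j, (#|Q j|%:R <= MR * F%:R)%R).

End Model.

Definition distinct_demands (KR N : nat) : {set {ffun 'I_KR -> 'I_N}} :=
  [set d : {ffun 'I_KR -> 'I_N} | injectiveb (fun i => d i)].

Definition perm_count (N KR : nat) : nat := N`! %/ (N - KR)`!.

(* Main.v *)
Require Import Defs.
From HB Require Import structures.
From mathcomp Require Import all_boot all_order all_algebra all_fingroup.
From mathcomp Require Import lra ring.
From Stdlib Require Import ClassicalEpsilon.
Import Order.TTheory GRing.Theory Num.Theory.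
Local Open Scope ring_scope.
Set Implicit Arguments. Unset Strict Implicit.

Lemma term_ineq (R : realFieldType) (a b l : R) : 0 <= a -> 0 < b ->
  2 * l * a - l ^+ 2 * (a * b) <= a / b.
Proof.
move=> a0 b0.
have bu : b * b^-1 = 1 by rewrite divff // gt_eqF.
have u0 : 0 < b^-1 by rewrite invr_gt0.
have : 0 <= a * b^-1 * (1 - l * b) ^+ 2.
  by apply: mulr_ge0; [apply: mulr_ge0; lra | exact: sqr_ge0].
have -> : a * b^-1 * (1 - l * b) ^+ 2 = a / b - (2 * l * a - l ^+ 2 * (a * b)).
  have e : a * b^-1 * (1 - l * b) ^+ 2 = a * b^-1 - 2 * l * a * (b * b^-1) + l^+2 * a * b * (b * b^-1) by ring.
  rewrite e bu; ring.
lra.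
Qed.

Lemma final_ineq (R : realFieldType) (T : finType) (a b t r : T -> R) (KT KR N F MT MR : R) :
 0 < N -> 0 <= MT -> 0 <= MR -> MR <= N -> 0 <= KT -> 0 <= KR -> 0 <= F ->
 (forall p, 0 <= a p) -> (forall p, 0 <= r p) -> (forall p, 0 < b p) ->
 (forall p, b p = t p + r p) -> (forall p, a p + r p = KR) ->
 \sum_p t p <= KT * MT * F -> \sum_p r p <= KR * MR * F -> #|T|%:R = N * F ->
 (KR * N * F * (1 - MR / N) ^+ 2) / (KT * MT + KR * MR) <= N^-1 * \sum_p a p / b p.
Proof.
move=> N0 MT0 MR0 MRN KT0 KR0 F0 a0 r0 b0 bE aE st sr cT.
have sum0 : 0 <= \sum_p a p / b p.
  by apply: sumr_ge0 => p _; apply: divr_ge0; [exact: a0 | exact: ltW].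
set S := KT * MT + KR * MR.
have S0 : 0 <= S by rewrite /S; apply: addr_ge0; apply: mulr_ge0.
have [Sz|Sp] := eqVneq S 0.
  rewrite Sz invr0 mulr0; apply: mulr_ge0 => //; rewrite invr_ge0; exact: ltW.
have Spos : 0 < S by rewrite lt_def Sp S0.
set l := (N - MR) / S.
have l0 : 0 <= l by rewrite /l; apply: divr_ge0; lra.
have suma : KR * F * (N - MR) <= \sum_p a p.
  have -> : \sum_p a p = KR * (N * F) - \sum_p r p.
    have -> : KR * (N * F) = \sum_(p : T) KR.
      by rewrite sumr_const -cT mulr_natr cardE.
    rewrite -sumrB; apply: eq_bigr => p _; rewrite -(aE p); ring.
  have : KR * (N * F) - KR * MR * F = KR * F * (N - MR) by ring.
  lra.
have sumab : \sum_p a p * b p <= KR * F * S.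
  apply: (@le_trans _ _ (\sum_p KR * b p)).
    apply: ler_sum => p _; apply: ler_wpM2r; first exact: ltW.
    have := r0 p; have := aE p; lra.
  rewrite -mulr_sumr; under eq_bigr do rewrite bE; rewrite big_split /=.
  have : KR * (\sum_p t p + \sum_p r p) <= KR * (KT * MT * F + KR * MR * F).
    by apply: ler_wpM2l => //; lra.
  have -> : KR * F * S = KR * (KT * MT * F + KR * MR * F) by rewrite /S; ring.
  done.
have key : 2 * l * \sum_p a p - l ^+ 2 * \sum_p a p * b p <= \sum_p a p / b p.
  rewrite mulr_sumr mulr_sumr -sumrB; apply: ler_sum => p _.
  exact: term_ineq.
have k2 : 2 * l * (KR * F * (N - MR)) - l ^+ 2 * (KR * F * S) <= \sum_p a p / b p.
  apply: le_trans key; apply: lerB.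
    by apply: ler_wpM2l => //; lra.
  by apply: ler_wpM2l => //; exact: sqr_ge0.
have e : 2 * l * (KR * F * (N - MR)) - l ^+ 2 * (KR * F * S) = KR * F * (N - MR)^+2 / S.
  rewrite /l; field; exact: Sp.
rewrite e in k2.
have -> : (KR * N * F * (1 - MR / N) ^+ 2) / S = N^-1 * (KR * F * (N - MR)^+2 / S).
  field; rewrite Sp gt_eqF //.
apply: ler_wpM2l => //; rewrite invr_ge0; exact: ltW.
Qed.

Section Comb.
Variables (R : realFieldType) (KT KR N F : nat).
Variables (P : 'I_KT -> {set packet N F}) (Q : 'I_KR -> {set packet N F}).

Definition wt (p : packet N F) : R := ((#|Tx_of P p| + #|Rx_of Q p|)%N%:R)^-1.

Lemma wt_ge0 p : 0 <= wt p.
Proof. by rewrite /wt invr_ge0 ler0n. Qed.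

Lemma feas_le1 (D : {set request KR N F}) : feasible P Q D -> \sum_(x in D) wt x.1 <= 1.
Proof.
case/andP=> _ /forallP H.
have [->|ne] := eqVneq D set0; first by rewrite big_set0 ler01.
have c0 : (0 < #|D|)%N by rewrite card_gt0.
apply: (@le_trans _ _ (\sum_(x in D) (#|D|%:R)^-1)).
  apply: ler_sum => x xD; have := H x; rewrite xD /= => hx.
  rewrite /wt lef_pV2 ?posrE ?ltr0n //; first by rewrite ler_nat.
  exact: leq_trans c0 hx.
by rewrite sumr_const -(mulr_natr (#|D|%:R^-1) #|D|) mulVf // pnatr_eq0 -lt0n c0.
Qed.

Lemma union_bound (H : nat) (Ds : 'I_H -> {set request KR N F}) (f : request KR N F -> R) :
  (forall x, 0 <= f x) ->
  \sum_(x in \bigcup_(m < H) Ds m) f x <= \sum_(m < H) \sum_(x in Ds m) f x.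
Proof.
move=> f0.
apply: (@le_trans _ _ (\sum_x \sum_(m < H) (if x \in Ds m then f x else 0))).
  rewrite [leRHS](bigID (fun x => x \in \bigcup_(m < H) Ds m)) /=.
  rewrite -[leLHS]addr0; apply: lerD; last first.
    by apply: sumr_ge0 => x _; apply: sumr_ge0 => m _; case: ifP.
  apply: ler_sum => x /bigcupP [m _ xm].
  rewrite (bigD1 m) //= xm -[leLHS]addr0; apply: lerD => //.
  by apply: sumr_ge0 => m' _; case: ifP.
rewrite exchange_big /=; apply: ler_sum => m _.
by rewrite [leRHS]big_mkcond.
Qed.

Hypothesis Pcov : forall p : packet N F, exists i, p \in P i.

Lemma coverable_ex d : exists H, coverable P Q d H.
Proof.
exists #|requests Q d|; apply/existsP.
exists [ffun m => [set enum_val (A := requests Q d) m]]; apply/andP; split.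
  apply/forallP => m; rewrite ffunE; apply/andP; split.
    apply/forallP => x; apply/implyP => /set1P ->; apply/forallP => y; apply/implyP => /set1P ->.
    by apply/implyP.
  apply/forallP => x; apply/implyP => _; rewrite cards1.
  have [i hi] := Pcov x.1.
  have : (0 < #|Tx_of P x.1|)%N by apply/card_gt0P; exists i; rewrite inE.
  by move=> h; apply: leq_trans h (leq_addr _ _).
apply/eqP/setP => x; apply/bigcupP/idP.
  by case=> m _; rewrite ffunE => /set1P ->; exact: enum_valP.
move=> hx; exists (enum_rank_in hx x) => //.
by rewrite ffunE enum_rankK_in // set11.
Qed.

Lemma hstar_bound d : \sum_(x in requests Q d) wt x.1 <= (Hstar P Q d)%:R.
Proof.
rewrite /Hstar; case: excluded_middle_informative => [e|ne]; last first.
  by exfalso; apply: ne; exact: coverable_ex.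
case: ex_minnP => H cov _.
case/existsP: cov => Ds /andP[/forallP feas /eqP U].
have ub := union_bound (H:=H) Ds (f := fun x => wt x.1) (fun x => wt_ge0 x.1).
rewrite -U; apply: le_trans ub _.
apply: (@le_trans _ _ (\sum_(m < H) 1)).
  by apply: ler_sum => m _; exact: feas_le1.
by rewrite sumr_const card_ord.
Qed.

End Comb.

Lemma slice_le (KR N : nat) (j : 'I_KR) (n n' : 'I_N) :
  (#|[set d in distinct_demands KR N | d j == n]| <= #|[set d in distinct_demands KR N | d j == n']|)%N.
Proof.
pose f := fun d : {ffun 'I_KR -> 'I_N} => [ffun i => tperm n n' (d i)].
have finj : injective f.
  move=> d1 d2 /ffunP h; apply/ffunP => i; have := h i; rewrite !ffunE.
  exact: (can_inj (tpermK n n')).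
rewrite -(card_imset _ finj); apply: subset_leq_card; apply/subsetP => _ /imsetP [d hd ->].
move: hd; rewrite !inE => /andP[hinj /eqP hj]; apply/andP; split.
  apply/injectiveP => i1 i2; rewrite !ffunE => /(can_inj (tpermK n n')).
  exact: (injectiveP _ hinj).
by rewrite ffunE hj tpermL.
Qed.

Lemma card_slice (KR N : nat) (j : 'I_KR) (n : 'I_N) :
  (#|[set d in distinct_demands KR N | d j == n]| * N = #|distinct_demands KR N|)%N.
Proof.
apply/esym; rewrite -sum1_card (partition_big (fun d : {ffun 'I_KR -> 'I_N} => d j) predT) //=.
rewrite (eq_bigr (fun _ => #|[set d in distinct_demands KR N | d j == n]|)).
  by rewrite sum_nat_const card_ord mulnC.
move=> n' _; rewrite sum1dep_card; apply/eqP; by rewrite eqn_leq !slice_le.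
Qed.

Lemma card_dd (KR N : nat) : (KR <= N)%N -> #|distinct_demands KR N| = perm_count N KR.
Proof.
move=> h; rewrite /distinct_demands /perm_count.
by rewrite card_inj_ffuns !card_ord ffact_factd.
Qed.

Lemma dcount (I T : finType) (A : I -> {set T}) :
  (\sum_(p : T) #|[set i | p \in A i]| = \sum_i #|A i|)%N.
Proof.
under eq_bigr do rewrite -sum1dep_card big_mkcond /=.
rewrite exchange_big; apply: eq_bigr => i _.
rewrite -big_mkcond /= sum1dep_card; by apply: eq_card => p; rewrite inE.
Qed.

Theorem lemma4 (R : realFieldType) (KT KR N F : nat) (MT MR : R) :
  (0 < KT)%N -> (0 < KR)%N -> (0 < F)%N -> (KR <= N)%N ->
  0 <= MT -> 0 <= MR -> MR <= N%:R ->
  forall (P : 'I_KT -> {set packet N F}) (Q : 'I_KR -> {set packet N F}),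
    valid_caching P Q MT MR ->
    (KR%:R * N%:R * F%:R * (1 - MR / N%:R) ^+ 2) / (KT%:R * MT + KR%:R * MR)
    <= (perm_count N KR)%:R^-1 *
       \sum_(d in distinct_demands KR N) (Hstar P Q d)%:R.
Proof.
move=> KT0 KR0 F0 KRN MT0 MR0 MRN P Q [Pcov [HP HQ]].
have N0 : (0 < N)%N by apply: leq_trans KRN.
have cD := card_dd KRN.
have D0 : (0 < #|distinct_demands KR N|)%N.
  by rewrite cD /perm_count -ffact_factd // ffact_gt0.
rewrite -cD.
set D := distinct_demands KR N.
pose w := wt R P Q.
pose c : R := #|D|%:R / N%:R.
have step2 : \sum_(d in D) \sum_(x in requests Q d) w x.1 =
    c * \sum_(p : packet N F) #|~: Rx_of Q p|%:R * w p.
  transitivity (\sum_(d in D) \sum_(x : request KR N F)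
     (if (x.1.1 == d x.2) && (x.1 \notin Q x.2) then w x.1 else 0)).
    by apply: eq_bigr => d _; rewrite big_mkcond; apply: eq_bigr => x _; rewrite inE.
  rewrite exchange_big /=.
  transitivity (\sum_(x : request KR N F) (if x.1 \notin Q x.2 then c * w x.1 else 0)).
    apply: eq_bigr => x _; case: ifP => hq; last first.
      by apply: big1 => d _; rewrite andbF.
    under eq_bigr do rewrite andbT.
    rewrite -big_mkcondr /=.
    rewrite (eq_bigl (fun d => d \in [set d in D | d x.2 == x.1.1])); last first.
      by move=> d; rewrite inE eq_sym.
    rewrite sumr_const -mulr_natl; congr (_ * _).
    rewrite /c -(card_slice x.2 x.1.1) natrM mulfK // pnatr_eq0 -lt0n //.
  rewrite -(pair_bigA _ (fun p j => if p \notin Q j then c * w p else 0)) /=.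
  rewrite mulr_sumr; apply: eq_bigr => p _.
  rewrite -big_mkcond /=.
  rewrite (eq_bigl (fun j => j \in ~: Rx_of Q p)); last first.
    by move=> j; rewrite !inE.
  by rewrite sumr_const -(mulr_natl (c * w p)) mulrCA.
apply: (@le_trans _ _ (#|D|%:R^-1 * \sum_(d in D) \sum_(x in requests Q d) w x.1)); last first.
  apply: ler_wpM2l; first by rewrite invr_ge0 ler0n.
  by apply: ler_sum => d _; exact: hstar_bound.
rewrite step2 /c.
have dnz : (#|D|%:R : R) != 0 by rewrite pnatr_eq0 -lt0n.
have nnz : (N%:R : R) != 0 by rewrite pnatr_eq0 -lt0n.
set S := \sum_p _.
have -> : #|D|%:R^-1 * (#|D|%:R / N%:R * S) = N%:R^-1 * S :> R.
  by field; rewrite dnz nnz.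
rewrite /S.
have -> : \sum_(p : packet N F) #|~: Rx_of Q p|%:R * w p =
  \sum_(p : packet N F) #|~: Rx_of Q p|%:R / (#|Tx_of P p| + #|Rx_of Q p|)%N%:R by [].
apply: (final_ineq (t := fun p => #|Tx_of P p|%:R) (r := fun p => #|Rx_of Q p|%:R)).
- by rewrite ltr0n.
- done.
- done.
- done.
- exact: ler0n.
- exact: ler0n.
- exact: ler0n.
- move=> p; exact: ler0n.
- move=> p; exact: ler0n.
- move=> p; have [i hi] := Pcov p.
  rewrite ltr0n; apply: leq_trans (leq_addr _ _).
  by apply/card_gt0P; exists i; rewrite inE.
- by move=> p; rewrite natrD.
- by move=> p; rewrite -natrD addnC cardsC card_ord.
- rewrite -natr_sum dcount natr_sum.
  apply: (@le_trans _ _ (\sum_(i < KT) MT * F%:R)); first by apply: ler_sum => i _.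
  by rewrite sumr_const card_ord -(mulr_natl (MT * F%:R)) mulrA.
- rewrite -natr_sum dcount natr_sum.
  apply: (@le_trans _ _ (\sum_(i < KR) MR * F%:R)); first by apply: ler_sum => i _.
  by rewrite sumr_const card_ord -(mulr_natl (MR * F%:R)) mulrA.
- by rewrite card_prod !card_ord natrM.
Qed.
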